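(* Let $n\ge1$, let $C$ be a finite set of points in convex position, and let the edges of $K_C$ be $2$-coloured. Suppose there are disjoint sets $L,R\subset C$ with $|L|=|R|=2n^2$ such that $L$ and $R$ can be separated by a line and all edges between $L$ and $R$ have the same colour. Then the colouring contains a monochromatic non-crossing copy of $L_{2n}$.
   Context: For a finite point set $C\subset\mathbb{R}^2$ in convex position (vertex set of a convex polygon), $K_C$ is the complete graph on $C$ with edges drawn as straight segments. A monochromatic non-crossing copy of a graph $G$ is an injective map $\phi:V(G)\to C$ such that all segments $\phi(x)\phi(y)$, $xy\in E(G)$, have the same colour and no two of them share a point other than a common endpoint. The ladder graph $L_{2n}$ consists of two paths $u_1\cdots u_n$ and $v_1\cdots v_n$ plus the edges $u_iv_i$, $i\in[n]$. *)

(* Defs.v *)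
From HB Require Import structures.
From mathcomp Require Import all_boot all_order all_algebra.
Set Implicit Arguments. Unset Strict Implicit. Unset Printing Implicit Defensive.
Import Order.TTheory GRing.Theory Num.Theory.
Local Open Scope ring_scope.

Definition point (R : realFieldType) := (R * R)%type.

Definition on_seg (R : realFieldType) (p a b : point R) : Prop :=
  exists t : R, 0 <= t /\ t <= 1 /\
    p = (a.1 + t * (b.1 - a.1), a.2 + t * (b.2 - a.2)).

Definition in_hull (R : realFieldType) (S : seq (point R)) (p : point R) : Prop :=
  exists w : 'I_(size S) -> R,
    (forall i, 0 <= w i) /\ \sum_(i < size S) w i = 1 /\
    \sum_(i < size S) w i * (nth p S i).1 = p.1 /\
    \sum_(i < size S) w i * (nth p S i).2 = p.2.

Definition convex_position (R : realFieldType) (C : seq (point R)) : Prop :=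
  uniq C /\ forall p, p \in C -> ~ in_hull (rem p C) p.

Definition line_separated (R : realFieldType) (L Rs : seq (point R)) : Prop :=
  exists a b c : R, (a != 0 \/ b != 0) /\
    (forall p, p \in L -> a * p.1 + b * p.2 < c) /\
    (forall p, p \in Rs -> a * p.1 + b * p.2 > c).

(* The ladder graph L_{2n}: vertex (false,i) is u_{i+1}, (true,i) is v_{i+1}. *)
Definition ladder_adj (n : nat) (x y : bool * 'I_n) : bool :=
  ((x.1 == y.1) && ((x.2.+1 == y.2 :> nat) || (y.2.+1 == x.2 :> nat)))
  || ((x.1 != y.1) && (x.2 == y.2)).

Definition mono_noncrossing_ladder (R : realFieldType) (n : nat)
    (C : seq (point R)) (col : point R -> point R -> bool) : Prop :=
  exists (phi : bool * 'I_n -> point R) (c : bool),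
    injective phi /\
    (forall x, phi x \in C) /\
    (forall x y, ladder_adj x y -> col (phi x) (phi y) = c) /\
    (forall x y x' y', ladder_adj x y -> ladder_adj x' y' ->
       ~ (x = x' /\ y = y') -> ~ (x = y' /\ y = x') ->
       forall p, on_seg p (phi x) (phi y) -> on_seg p (phi x') (phi y') ->
         (p = phi x \/ p = phi y) /\ (p = phi x' \/ p = phi y')).

(* Main.v *)
Require Import Defs.
From HB Require Import structures.
From mathcomp Require Import all_boot all_order all_algebra.
Import Order.TTheory GRing.Theory Num.Theory.
Local Open Scope ring_scope.
From mathcomp Require Import ring lra zify.
From Stdlib Require Import Classical.
Set Implicit Arguments. Unset Strict Implicit.

Section Geo.
Variable R : realFieldType.
Implicit Types a b c d o p : point R.

Definition orient a b c : R := (b.1 - a.1) * (c.2 - a.2) - (b.2 - a.2) * (c.1 - a.1).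

Lemma orient_cyc a b c : orient a b c = orient b c a.
Proof. rewrite /orient; ring. Qed.
Lemma orient_swap a b c : orient a c b = - orient a b c.
Proof. rewrite /orient; ring. Qed.
Lemma orient_aab a b : orient a a b = 0.
Proof. rewrite /orient; ring. Qed.
Lemma orient_abb a b : orient a b b = 0.
Proof. rewrite /orient; ring. Qed.
Lemma orient_aba a b : orient a b a = 0.
Proof. rewrite /orient; ring. Qed.

Lemma hull3_list (S : seq (point R)) p a b c (al be ga : R) :
  uniq S -> a \in S -> b \in S -> c \in S ->
  0 <= al -> 0 <= be -> 0 <= ga -> al + be + ga = 1 ->
  al * a.1 + be * b.1 + ga * c.1 = p.1 ->
  al * a.2 + be * b.2 + ga * c.2 = p.2 -> in_hull S p.
Proof.
move=> uS aS bS cS h1 h2 h3 hs e1 e2.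
pose f (q : point R) (x : R) (i : 'I_(size S)) := if nth p S i == q then x else 0.
have sumf : forall (q : point R) (x : R) (g : point R -> R), q \in S ->
   \sum_(i < size S) f q x i * g (nth p S i) = x * g q.
  move=> q x g qS.
  have iq : (index q S < size S)%N by rewrite index_mem.
  rewrite (bigD1 (Ordinal iq)) //= big1 ?addr0.
    by rewrite /f /= !nth_index // eqxx.
  move=> i /eqP ne; rewrite /f; case: eqP => [e|]; last by rewrite mul0r.
  exfalso; apply: ne; apply: val_inj => /=.
  by rewrite -e index_uniq.
exists (fun i => f a al i + f b be i + f c ga i); split.
  by move=> i; rewrite /f; do !case: ifP => _; lra.
split.
  rewrite (eq_bigr (fun i => f a al i * (fun=> 1) (nth p S i) + f b be i * (fun=> 1) (nth p S i) + f c ga i * (fun=> 1) (nth p S i))); last by move=> i _; rewrite !mulr1.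
  by rewrite !big_split /= !(sumf _ _ (fun=> 1)) // !mulr1.
split.
  rewrite (eq_bigr (fun i => f a al i * (nth p S i).1 + f b be i * (nth p S i).1 + f c ga i * (nth p S i).1)); last by move=> i _; rewrite !mulrDl.
  by rewrite !big_split /= !sumf.
rewrite (eq_bigr (fun i => f a al i * (nth p S i).2 + f b be i * (nth p S i).2 + f c ga i * (nth p S i).2)); last by move=> i _; rewrite !mulrDl.
by rewrite !big_split /= !sumf.
Qed.

Variable C : seq (point R).
Hypothesis cpC : convex_position C.

Lemma cp_hull p a b c (al be ga : R) :
  p \in C -> a \in C -> b \in C -> c \in C -> a != p -> b != p -> c != p ->
  0 <= al -> 0 <= be -> 0 <= ga -> 0 < al + be + ga ->
  al * a.1 + be * b.1 + ga * c.1 = (al + be + ga) * p.1 ->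
  al * a.2 + be * b.2 + ga * c.2 = (al + be + ga) * p.2 -> False.
Proof.
case: cpC => uC hC pC aC bC cC ap bp cp h1 h2 h3 hs e1 e2.
apply: (hC p pC).
set s := al + be + ga in hs e1 e2.
have sn : s != 0 by rewrite gt_eqF.
apply: (hull3_list (a:=a) (b:=b) (c:=c) (al:=al / s) (be:=be / s) (ga:=ga / s)).
- exact: rem_uniq.
- by rewrite mem_rem_uniq // inE ap.
- by rewrite mem_rem_uniq // inE bp.
- by rewrite mem_rem_uniq // inE cp.
- by rewrite divr_ge0 // ltW.
- by rewrite divr_ge0 // ltW.
- by rewrite divr_ge0 // ltW.
- by rewrite -!mulrDl divff.
- apply: (mulfI sn); rewrite -e1; field; done.
- apply: (mulfI sn); rewrite -e2; field; done.
Qed.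

Lemma cp_tri p a b c :
  p \in C -> a \in C -> b \in C -> c \in C -> a != p -> b != p -> c != p ->
  0 <= orient p b c -> 0 <= orient p c a -> 0 <= orient p a b ->
  0 < orient p b c + orient p c a + orient p a b -> False.
Proof.
move=> pC aC bC cC ap bp cp h1 h2 h3 hs.
apply: (cp_hull pC aC bC cC ap bp cp h1 h2 h3 hs); rewrite /orient; ring.
Qed.

Lemma point_neq (a b : point R) : a != b -> 0 < (a.1 - b.1)^+2 + (a.2 - b.2)^+2.
Proof.
case: a b => [a1 a2] [b1 b2] /= ne.
have g1 := sqr_ge0 (a1 - b1); have g2 := sqr_ge0 (a2 - b2).
have [e1|n1] := eqVneq a1 b1.
  have [e2|n2] := eqVneq a2 b2; first by move: ne; rewrite e1 e2 eqxx.
  have : 0 < (a2 - b2)^+2 by rewrite lt_def sqrf_eq0 subr_eq0 n2 sqr_ge0.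
  lra.
have : 0 < (a1 - b1)^+2 by rewrite lt_def sqrf_eq0 subr_eq0 n1 sqr_ge0.
lra.
Qed.

Lemma eq_by_orient (X Y k : R) a b c : orient a b c = 0 ->
  X - Y = k * orient a b c -> X = Y.
Proof. by move=> -> /eqP; rewrite mulr0 subr_eq0 => /eqP. Qed.

Lemma cp_coll a b c : a \in C -> b \in C -> c \in C ->
  a != b -> b != c -> a != c -> orient a b c = 0 -> False.
Proof.
move=> aC bC cC ab bc ac o0.
have Np := point_neq (ac : a != c); rewrite eq_sym in ac.
have Np' : 0 < (c.1 - a.1)^+2 + (c.2 - a.2)^+2.
  by move: Np; rewrite -(sqrrN (a.1 - c.1)) -(sqrrN (a.2 - c.2)) !opprB.
set N := (c.1 - a.1)^+2 + (c.2 - a.2)^+2 in Np'.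
set d := (c.1 - a.1) * (b.1 - a.1) + (c.2 - a.2) * (b.2 - a.2).
have [dle|dge] := lerP d 0.
  apply: (cp_hull (p:=a) (a:=b) (b:=c) (c:=c) (al:=N) (be:=-d) (ga:=0)) => //.
  - by rewrite eq_sym.
  - by rewrite ltW.
  - lra.
  - lra.
  - apply: (eq_by_orient (k:= (c.2 - a.2)) o0); rewrite /orient /N /d; ring.
  - apply: (eq_by_orient (k:= -(c.1 - a.1)) o0); rewrite /orient /N /d; ring.
have [dN|dN] := lerP d N.
  apply: (cp_hull (p:=b) (a:=a) (b:=c) (c:=c) (al:=N-d) (be:=d) (ga:=0)) => //.
  - by rewrite eq_sym.
  - by rewrite eq_sym.
  - lra.
  - lra.
  - lra.
  - apply: (eq_by_orient (k:= -(c.2 - a.2)) o0); rewrite /orient /N /d; ring.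
  - apply: (eq_by_orient (k:= (c.1 - a.1)) o0); rewrite /orient /N /d; ring.
apply: (cp_hull (p:=c) (a:=b) (b:=a) (c:=a) (al:=N) (be:=d-N) (ga:=0)) => //.
- by rewrite eq_sym.
- by rewrite eq_sym.
- by rewrite ltW.
- lra.
- lra.
- apply: (eq_by_orient (k:= (c.2 - a.2)) o0); rewrite /orient /N /d; ring.
- apply: (eq_by_orient (k:= -(c.1 - a.1)) o0); rewrite /orient /N /d; ring.
Qed.

Lemma orient_pos_neq a b c : 0 < orient a b c -> [/\ a != b, b != c & a != c].
Proof.
move=> h; split; apply/eqP => e; move: h; rewrite e ?orient_aab ?orient_abb ?orient_aba ltxx //.
Qed.

Lemma piv_trans o x y z : o \in C -> x \in C -> y \in C -> z \in C ->
  0 < orient o x y -> 0 < orient o y z -> 0 < orient o x z.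
Proof.
move=> oC xC yC zC h1 h2.
have [ox xy oy] := orient_pos_neq h1.
have [_ yz oz] := orient_pos_neq h2.
have [xz|xz] := eqVneq x z.
  by move: h2; rewrite -xz orient_swap; lra.
have [hlt|hgt|heq] := ltgtP (orient o x z) 0; first last.
- exfalso; exact: (cp_coll oC xC zC ox xz oz heq).
- by [].
- exfalso; have e1 : orient o z x = - orient o x z by rewrite /orient; ring.
  apply: (cp_tri (p:=o) (a:=x) (b:=y) (c:=z)) => //; try by rewrite eq_sym.
  all: lra.
Qed.

Lemma piv_tri o x y z : o \in C -> x \in C -> y \in C -> z \in C ->
  0 < orient o x y -> 0 < orient o y z -> 0 < orient x y z.
Proof.
move=> oC xC yC zC h1 h2.
have h3 := piv_trans oC xC yC zC h1 h2.
have [ox xy oy] := orient_pos_neq h1.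
have [_ yz oz] := orient_pos_neq h2.
have [_ xz _] := orient_pos_neq h3.
have [hlt|hgt|heq] := ltgtP (orient x y z) 0; first last.
- exfalso; exact: (cp_coll xC yC zC xy yz xz heq).
- by [].
- exfalso; have e1 : orient y x z = - orient x y z by rewrite /orient; ring.
  have e2 : orient y z o = orient o y z by rewrite /orient; ring.
  have e3 : orient y o x = orient o x y by rewrite /orient; ring.
  apply: (cp_tri (p:=y) (a:=o) (b:=x) (c:=z)) => //; try by rewrite eq_sym.
  all: lra.
Qed.

End Geo.

Section Geo2.
Variable R : realFieldType.
Implicit Types a b c d o p : point R.

Lemma four_sep a b c d (al be ga : R) :
  0 < orient a b c -> 0 < orient a b d -> 0 < orient a c d -> 0 < orient b c d ->
  al * a.1 + be * a.2 < ga -> al * c.1 + be * c.2 < ga ->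
  ga < al * b.1 + be * b.2 -> ga < al * d.1 + be * d.2 -> False.
Proof.
move=> o1 o2 o3 o4 ha hc hb hd.
have id : orient b c d * (al * a.1 + be * a.2 - ga) + orient a b d * (al * c.1 + be * c.2 - ga)
  = orient a c d * (al * b.1 + be * b.2 - ga) + orient a b c * (al * d.1 + be * d.2 - ga).
  rewrite /orient; ring.
have p1 : orient b c d * (al * a.1 + be * a.2 - ga) < 0 by rewrite pmulr_rlt0 // subr_lt0.
have p2 : orient a b d * (al * c.1 + be * c.2 - ga) < 0 by rewrite pmulr_rlt0 // subr_lt0.
have p3 : 0 < orient a c d * (al * b.1 + be * b.2 - ga) by rewrite pmulr_rgt0 // subr_gt0.
have p4 : 0 < orient a b c * (al * d.1 + be * d.2 - ga) by rewrite pmulr_rgt0 // subr_gt0.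
lra.
Qed.

Lemma on_seg_sym p a b : on_seg p a b -> on_seg p b a.
Proof.
case=> t [t0 [t1 ->]]; exists (1 - t); split; first lra; split; first lra.
congr (_, _) => /=; ring.
Qed.

Lemma seg_orient0 p a b : on_seg p a b -> orient a b p = 0.
Proof. case=> t [_ [_ ->]]; rewrite /orient /=; ring. Qed.

Lemma seg_sep p a b c d : on_seg p a b -> on_seg p c d ->
  0 < orient a b c -> 0 < orient a b d -> False.
Proof.
move=> /seg_orient0 h0 [t [t0 [t1 ep]]] hc hd.
have : orient a b p = (1 - t) * orient a b c + t * orient a b d.
  by rewrite ep /orient /=; ring.
rewrite h0 => e.
have : 0 < (1 - t) * orient a b c + t * orient a b d.
  have [t1'|t1'] := eqVneq t 1.
    by rewrite t1' subrr mul0r add0r mul1r.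
  have : 0 < 1 - t by rewrite lt_def subr_eq0 eq_sym t1' subr_ge0.
  move=> h; have := mulr_gt0 h hc; have := mulr_ge0 t0 (ltW hd); lra.
lra.
Qed.

Lemma seg_sep' p a b c d : on_seg p a b -> on_seg p c d ->
  orient a b c < 0 -> orient a b d < 0 -> False.
Proof.
move=> /on_seg_sym h1 h2 hc hd; apply: (seg_sep h1 h2); rewrite -orient_cyc orient_swap orient_cyc; lra.
Qed.

Lemma seg_shared p a b c : on_seg p a b -> on_seg p a c -> orient a b c != 0 -> p = a.
Proof.
move=> /seg_orient0 h0 [s [s0 [s1 ep]]] hn.
have : orient a b p = s * orient a b c by rewrite ep /orient /=; ring.
rewrite h0 => /esym /eqP; rewrite mulf_eq0 (negbTE hn) orbF => /eqP s00.
by rewrite ep s00 !mul0r !addr0; case: a {h0 ep hn}.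
Qed.
End Geo2.


Definition lpos n (x : bool * 'I_n) : nat := if x.1 then ((2*n).-1 - x.2)%N else x.2.

Lemma lpos_lt n (x : bool * 'I_n) : (lpos x < 2 * n)%N.
Proof. case: x => [[] [i hi]]; rewrite /lpos /=; lia. Qed.

Lemma lpos_inj n : injective (@lpos n).
Proof.
move=> [[] [i hi]] [[] [j hj]]; rewrite /lpos /= => h; try lia;
  congr (_, _); apply: val_inj => /=; lia.
Qed.

Definition ty n (A B : nat) : Prop := (A.+1 = B \/ B.+1 = A \/ A + B = (2*n).-1)%N.

Lemma adj_pos n (x y : bool * 'I_n) : ladder_adj x y ->
  ty n (lpos x) (lpos y) /\ lpos x <> lpos y.
Proof.
case: x y => [[] [i hi]] [[] [j hj]]; rewrite /ladder_adj /lpos /ty /=.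
- by move=> /orP [/orP [] | //] /eqP h; lia.
- by move=> /eqP [] h; lia.
- by move=> /eqP [] h; lia.
- by move=> /orP [/orP [] | //] /eqP h; lia.
Qed.

Definition cycP (i j k : nat) : Prop := ((i < j < k) \/ (j < k < i) \/ (k < i < j))%N.

Section Ladder.
Variable R : realFieldType.
Variables (n : nat) (C : seq (point R)) (col : point R -> point R -> bool) (q : seq (point R)) (c : bool).
Hypothesis n1 : (1 <= n)%N.
Hypothesis colS : forall p p', col p p' = col p' p.
Hypothesis sq : size q = (2 * n)%N.
Hypothesis uq : uniq q.
Hypothesis qC : forall i, (i < 2 * n)%N -> nth (0,0) q i \in C.
Hypothesis qtri : forall i j k, (i < j)%N -> (j < k)%N -> (k < 2 * n)%N ->
  0 < orient (nth (0,0) q i) (nth (0,0) q j) (nth (0,0) q k).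
Hypothesis qcol : forall i j, (i < j)%N -> (j < 2 * n)%N -> ty n i j ->
  col (nth (0,0) q i) (nth (0,0) q j) = c.

Let Q i := nth (0,0) q i.

Lemma sgnQ i j k : (i < 2 * n)%N -> (j < 2 * n)%N -> (k < 2 * n)%N ->
  i <> j -> j <> k -> i <> k ->
  (cycP i j k -> 0 < orient (Q i) (Q j) (Q k)) /\ (~ cycP i j k -> orient (Q i) (Q j) (Q k) < 0).
Proof.
move=> hi hj hk ij jk ik; rewrite /cycP.
have e1 : forall a b c', orient a b c' = orient b c' a by move=> *; rewrite /orient; ring.
have e2 : forall a b c', orient a c' b = - orient a b c' by move=> *; rewrite /orient; ring.
have [h|[h|[h|[h|[h|h]]]]] : ((i < j < k) \/ (j < k < i) \/ (k < i < j) \/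
   (i < k < j) \/ (j < i < k) \/ (k < j < i))%N by lia.
- have P := qtri (i:=i) (j:=j) (k:=k) ltac:(lia) ltac:(lia) ltac:(lia).
  have E : orient (Q i) (Q j) (Q k) =  orient (Q i) (Q j) (Q k) by rewrite /orient; ring.
  rewrite ?E; split => hc.
    by rewrite /Q in P *; lra.
  by exfalso; lia.
- have P := qtri (i:=j) (j:=k) (k:=i) ltac:(lia) ltac:(lia) ltac:(lia).
  have E : orient (Q i) (Q j) (Q k) =  orient (Q j) (Q k) (Q i) by rewrite /orient; ring.
  rewrite ?E; split => hc.
    by rewrite /Q in P *; lra.
  by exfalso; lia.
- have P := qtri (i:=k) (j:=i) (k:=j) ltac:(lia) ltac:(lia) ltac:(lia).
  have E : orient (Q i) (Q j) (Q k) =  orient (Q k) (Q i) (Q j) by rewrite /orient; ring.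
  rewrite ?E; split => hc.
    by rewrite /Q in P *; lra.
  by exfalso; lia.
- have P := qtri (i:=i) (j:=k) (k:=j) ltac:(lia) ltac:(lia) ltac:(lia).
  have E : orient (Q i) (Q j) (Q k) = - orient (Q i) (Q k) (Q j) by rewrite /orient; ring.
  rewrite ?E; split => hc.
    by exfalso; lia.
  by rewrite /Q in P *; lra.
- have P := qtri (i:=j) (j:=i) (k:=k) ltac:(lia) ltac:(lia) ltac:(lia).
  have E : orient (Q i) (Q j) (Q k) = - orient (Q j) (Q i) (Q k) by rewrite /orient; ring.
  rewrite ?E; split => hc.
    by exfalso; lia.
  by rewrite /Q in P *; lra.
- have P := qtri (i:=k) (j:=j) (k:=i) ltac:(lia) ltac:(lia) ltac:(lia).
  have E : orient (Q i) (Q j) (Q k) = - orient (Q k) (Q j) (Q i) by rewrite /orient; ring.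
  rewrite ?E; split => hc.
    by exfalso; lia.
  by rewrite /Q in P *; lra.
Qed.


Lemma QneqO i j k : (i < 2 * n)%N -> (j < 2 * n)%N -> (k < 2 * n)%N ->
  i <> j -> j <> k -> i <> k -> orient (Q i) (Q j) (Q k) != 0.
Proof.
move=> hi hj hk ij jk ik; have [h1 h2] := sgnQ hi hj hk ij jk ik.
have [h|h] := classic (cycP i j k).
- by have := h1 h; rewrite lt_def => /andP [].
- by have := h2 h; rewrite lt_def eq_sym => /andP [].
Qed.

Lemma ncQ A B A' B' p : (A < 2 * n)%N -> (B < 2 * n)%N -> (A' < 2 * n)%N -> (B' < 2 * n)%N ->
  ty n A B -> ty n A' B' -> A <> B -> A' <> B' ->
  ~ (A = A' /\ B = B') -> ~ (A = B' /\ B = A') ->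
  on_seg p (Q A) (Q B) -> on_seg p (Q A') (Q B') ->
  (p = Q A \/ p = Q B) /\ (p = Q A' \/ p = Q B').
Proof.
move=> hA hB hA' hB' tA tA' nAB nA'B' ne1 ne2 s1 s2.
have [e|nAA'] := eqVneq A A'.
  subst A'; have -> : p = Q A by apply: (seg_shared s1 s2); apply: QneqO => //; lia.
  by split; left.
have [e|nAB'] := eqVneq A B'.
  subst B'; have -> : p = Q A by apply: (seg_shared s1 (on_seg_sym s2)); apply: QneqO => //; lia.
  by split; [left|right].
have [e|nBA'] := eqVneq B A'.
  subst A'; have -> : p = Q B by apply: (seg_shared (on_seg_sym s1) s2); apply: QneqO => //; lia.
  by split; [right|left].
have [e|nBB'] := eqVneq B B'.
  subst B'; have -> : p = Q B by apply: (seg_shared (on_seg_sym s1) (on_seg_sym s2)); apply: QneqO => //; lia.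
  by split; right.
exfalso.
move: nAA' nAB' nBA' nBB' => /eqP nAA' /eqP nAB' /eqP nBA' /eqP nBB'.
have [s3 s4] := sgnQ hA hB hA' nAB nBA' nAA'.
have [s5 s6] := sgnQ hA hB hB' nAB nBB' nAB'.
have [[h1 h2]|[h1 h2]] : (cycP A B A' /\ cycP A B B') \/ (~ cycP A B A' /\ ~ cycP A B B').
  rewrite /cycP; move: tA tA'; rewrite /ty; lia.
- exact: (seg_sep s1 s2 (s3 h1) (s5 h2)).
- exact: (seg_sep' s1 s2 (s4 h1) (s6 h2)).
Qed.

Lemma ladder_of_seq : mono_noncrossing_ladder n C col.
Proof.
exists (fun x => Q (lpos x)), c; split; [|split; [|split]].
- move=> x y /eqP; rewrite /Q nth_uniq ?sq ?lpos_lt // => /eqP; exact: lpos_inj.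
- by move=> x; apply: qC; apply: lpos_lt.
- move=> x y /adj_pos [t ne].
  have hx := lpos_lt x; have hy := lpos_lt y.
  have [lt|gt] := ltnP (lpos x) (lpos y).
    by apply: qcol.
  rewrite colS; apply: qcol => //; first lia.
  move: t; rewrite /ty; lia.
- move=> x y x' y' /adj_pos [t ne] /adj_pos [t' ne'] n1' n2' p s1 s2.
  apply: ncQ => //; try exact: lpos_lt.
  + by case=> /lpos_inj e1 /lpos_inj e2; apply: n1'.
  + by case=> /lpos_inj e1 /lpos_inj e2; apply: n2'.
Qed.
End Ladder.

Close Scope ring_scope.

Section Comb.
Variable T : eqType.
Variable e : rel T.

Definition mx (x : T) (z : seq (T * nat)) : nat :=
  foldr (fun a acc => if e x a.1 then maxn a.2 acc else acc) 0 z.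

Fixpoint lab (s : seq T) : seq (T * nat) :=
  match s with [::] => [::] | x :: t => (x, (mx x (lab t)).+1) :: lab t end.

Lemma mx_ge x z a : a \in z -> e x a.1 -> a.2 <= mx x z.
Proof.
elim: z => //= b z IH; rewrite inE => /orP [/eqP <- -> | az ea]; first exact: leq_maxl.
case: ifP => _; last exact: IH.
exact: leq_trans (IH az ea) (leq_maxr _ _).
Qed.

Lemma mx_att x z : mx x z = 0 \/ exists2 a, a \in z & e x a.1 /\ a.2 = mx x z.
Proof.
elim: z => [|b z IH] /=; first by left.
case: ifP => eb; last first.
  case: IH => [->|[a az ha]]; [by left | by right; exists a => //; rewrite inE az orbT].
case: (leqP (mx x z) b.2) => h.
  right; exists b; first by rewrite inE eqxx.
  by split => //; rewrite /maxn; case: ltnP => //; lia.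
case: IH => [e0|[a az [ea ha]]]; first lia.
right; exists a; first by rewrite inE az orbT.
by split => //; rewrite /maxn; case: ltnP => //; lia.
Qed.

Lemma lab_fst s : map fst (lab s) = s.
Proof. by elim: s => //= x s ->. Qed.

Lemma lab_pos s a : a \in lab s -> 0 < a.2.
Proof. elim: s => //= x s IH; rewrite inE => /orP [/eqP -> //| /IH //]. Qed.

Lemma lab_pw s : pairwise (fun a b => e a.1 b.1 ==> (b.2 < a.2)) (lab s).
Proof.
elim: s => //= x s IH; rewrite IH andbT; apply/allP => a az /=.
by apply/implyP => ea; rewrite ltnS; apply: mx_ge.
Qed.

Lemma lab_chain s a : a \in lab s ->
  exists p, [/\ subseq (a.1 :: p) s, size p = a.2.-1 & path e a.1 p].
Proof.
elim: s a => //= x s IH a; rewrite inE => /orP [/eqP -> /= | az]; last first.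
  have [p [h1 h2 h3]] := IH a az; exists p; split => //.
  exact: subseq_trans h1 (subseq_cons _ _).
case: (mx_att x (lab s)) => [->|[b bz [eb hb]]].
  by exists [::]; rewrite /= eqxx sub0seq.
have [p [h1 h2 h3]] := IH b bz.
exists (b.1 :: p); split.
- by rewrite /= eqxx.
- rewrite [size _]/= h2 -hb; exact: prednK (lab_pos bz).
- by rewrite /= eb h3.
Qed.

Lemma pigeon (Z : seq (T * nat)) k m :
  (forall a, a \in Z -> 0 < a.2 <= k) ->
  (forall v, count (fun a => a.2 == v) Z < m) -> size Z <= k * m.-1.
Proof.
elim: k Z => [|k IH] Z hZ hc.
  case: Z hZ {hc} => // a Z /(_ a); rewrite inE eqxx => /(_ isT); move: (a.2) => v; lia.
rewrite -(count_predC (fun a => a.2 == k.+1)).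
have h1 := hc k.+1.
have : count (predC (fun a : T * nat => a.2 == k.+1)) Z <= k * m.-1.
  rewrite -size_filter; apply: IH.
    move=> a; rewrite mem_filter => /andP [/= h /hZ]; move: h; move: (a.2) => v; lia.
  move=> v; rewrite count_filter; apply: leq_ltn_trans (hc v).
  by apply: sub_count => a /= /andP [].
move=> h2; rewrite mulSn; apply: leq_add; last exact: h2.
by move: h1; case: (m) => //= m'; rewrite ltnS.
Qed.

Lemma chain_or_anti (s : seq T) n m : 0 < n -> 0 < m ->
  (n.-1 * m.-1 < size s) ->
  (exists p, [/\ subseq p s, size p = n & sorted e p]) \/
  (exists p, [/\ subseq p s, size p = m & pairwise (fun x y => ~~ e x y) p]).
Proof.
move=> n0 m0 hs.
case: (boolP (has (fun a => n <= a.2) (lab s))) => [/hasP [a az ha]|hn].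
  left; have [p [h1 h2 h3]] := lab_chain az.
  exists (take n (a.1 :: p)); split.
  - exact: subseq_trans (take_subseq _ _) h1.
  - rewrite size_takel //= h2; have := lab_pos az; move: ha; move: (a.2) => v; lia.
  - by apply: take_sorted.
right.
have [v hv] : exists v, m <= count (fun a => a.2 == v) (lab s).
  apply: NNPP => hne.
  have hc : forall v, count (fun a => a.2 == v) (lab s) < m.
    by move=> v; rewrite ltnNge; apply/negP => h; apply: hne; exists v.
  have hb : forall a, a \in lab s -> 0 < a.2 <= n.-1.
    move=> a az; have := lab_pos az.
    have : ~~ (n <= a.2) by apply: contra hn => h; apply/hasP; exists a.
    move: (a.2) => w; lia.
  have := pigeon hb hc.
  by rewrite -(size_map fst) lab_fst; lia.
set F := filter (fun a => a.2 == v) (lab s).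
exists (take m (map fst F)); split.
- apply: subseq_trans (take_subseq _ _) _.
  by rewrite -{1}(lab_fst s); apply: map_subseq; apply: filter_subseq.
- by rewrite size_takel // size_map size_filter.
- apply: subseq_pairwise (take_subseq _ _) _.
  rewrite pairwise_map.
  have : pairwise (fun a b => e a.1 b.1 ==> (b.2 < a.2)) F by apply: pairwise_filter; apply: lab_pw.
  have : all (fun a => a.2 == v) F by apply/allP => a; rewrite mem_filter => /andP [].
  elim: F => //= a F IH /andP [av aF] /andP [ha hF].
  rewrite IH // andbT; apply/allP => b bF /=.
  have bv : b.2 == v by move/allP: aF => /(_ b bF).
  move/allP: ha => /(_ b bF) /=; rewrite (eqP av) (eqP bv) ltnn implybF //.
Qed.

End Comb.

Open Scope ring_scope.

Lemma max_in (T : eqType) (X : seq T) (r : rel T) : X != [::] ->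
  (forall x y z, x \in X -> y \in X -> z \in X -> r x y -> r y z -> r x z) ->
  (forall x y, x \in X -> y \in X -> x != y -> r x y \/ r y x) ->
  exists2 m, m \in X & forall x, x \in X -> x != m -> r x m.
Proof.
elim: X => // x X IH _ tr to.
case: (eqVneq X [::]) => [->|nX].
  by exists x; [rewrite inE | move=> y; rewrite inE => /eqP ->; rewrite eqxx].
have sub : forall a, a \in X -> a \in x :: X by move=> a ha; rewrite inE ha orbT.
have [m mX hm] := IH nX (fun a b c ha hb hc => tr a b c (sub _ ha) (sub _ hb) (sub _ hc))
   (fun a b ha hb => to a b (sub _ ha) (sub _ hb)).
have xx : x \in x :: X by rewrite inE eqxx.
have mm : m \in x :: X by rewrite inE mX orbT.
case: (eqVneq x m) => [xm|xm].
  exists m => // y; rewrite inE => /orP [/eqP ->|]; [by rewrite xm eqxx | exact: hm].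
case: (to x m xx mm xm) => h.
  exists m => // y; rewrite inE => /orP [/eqP -> //|]; exact: hm.
exists x => // y; rewrite inE => /orP [/eqP -> | yX yx]; first by rewrite eqxx.
case: (eqVneq y m) => [-> //|ym].
apply: (tr y m x) => //; [by rewrite inE yX orbT | exact: hm].
Qed.

Section Key.
Variable R : realFieldType.
Variables (C L Rs : seq (point R)) (l0 o : point R) (al be ga : R).
Hypothesis cpC : convex_position C.
Hypothesis LC : {subset L <= C}.
Hypothesis RC : {subset Rs <= C}.
Hypothesis disj : forall p, p \in L -> p \notin Rs.
Hypothesis l0L : l0 \in L.
Hypothesis oR : o \in Rs.
Hypothesis omax : forall r, r \in Rs -> r != o -> 0 < orient l0 r o.
Hypothesis sepL : forall p, p \in L -> al * p.1 + be * p.2 < ga.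
Hypothesis sepR : forall p, p \in Rs -> al * p.1 + be * p.2 > ga.

Lemma neqLR l r : l \in L -> r \in Rs -> l != r.
Proof. by move=> lL rR; apply/eqP => e; move: (disj lL); rewrite e rR. Qed.

Lemma orient_nz a b c : a \in C -> b \in C -> c \in C -> a != b -> b != c -> a != c ->
  0 < orient a b c \/ 0 < orient a c b.
Proof.
move=> aC bC cC ab bc ac.
have [h|h|h] := ltgtP (orient a b c) 0.
- by right; rewrite orient_swap oppr_gt0.
- by left.
- by exfalso; exact: (cp_coll cpC aC bC cC ab bc ac h).
Qed.

Lemma key l r : l \in L -> r \in Rs -> r != o -> 0 < orient o l r.
Proof.
move=> lL rR ro.
have lC := LC lL; have rC := RC rR; have oC := RC oR; have l0C := LC l0L.
have lr := neqLR lL rR; have lo := neqLR lL oR; have l0r := neqLR l0L rR; have l0o := neqLR l0L oR.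
have ror := omax rR ro.
case: (eqVneq l l0) => [->|ll0].
  by rewrite orient_cyc.
rewrite eq_sym in ll0.
case: (orient_nz l0C lC rC ll0 lr l0r) => [h|h]; first last.
  case: (orient_nz l0C lC oC ll0 lo l0o) => [h'|h'].
    exfalso.
    have h4 := piv_tri cpC l0C rC lC oC h h'.
    exact: (four_sep h ror h' h4 (sepL l0L) (sepL lL) (sepR rR) (sepR oR)).
  have := piv_tri cpC l0C rC oC lC ror h'.
  by rewrite orient_cyc.
by have := piv_tri cpC l0C lC rC oC h ror; rewrite orient_cyc orient_cyc.
Qed.
End Key.


Section Order.
Variable R : realFieldType.
Variables (C L Rs : seq (point R)) (o : point R).
Hypothesis cpC : convex_position C.
Hypothesis LC : {subset L <= C}.
Hypothesis RC : {subset Rs <= C}.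
Hypothesis disj : forall p, p \in L -> p \notin Rs.
Hypothesis oR : o \in Rs.
Hypothesis keyH : forall l r, l \in L -> r \in Rs -> r != o -> 0 < orient o l r.

Definition ltp (x y : point R) : bool :=
  [&& x \in C, y \in C, x != o & (y == o) || (0 < orient o x y)].

Lemma ltp_trans : transitive ltp.
Proof.
move=> y x z /and4P [xC yC xo h1] /and4P [_ zC yo h2].
apply/and4P; split => //.
case/orP: h2 => [-> //|h2]; apply/orP; right.
case/orP: h1 => [/eqP e|h1]; first by move: yo; rewrite e eqxx.
exact: (piv_trans cpC (RC oR) xC yC zC h1 h2).
Qed.

Lemma ltp_tri x y z : ltp x y -> ltp y z -> 0 < orient x y z.
Proof.
move=> /and4P [xC yC xo h1] /and4P [_ zC yo h2].
case/orP: h1 => [/eqP e|h1]; first by move: yo; rewrite e eqxx.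
case/orP: h2 => [/eqP ->|h2].
  by rewrite -orient_cyc.
exact: (piv_tri cpC (RC oR) xC yC zC h1 h2).
Qed.

Lemma ltp_irr : irreflexive ltp.
Proof.
move=> x; apply/negP => /and4P [_ _ xo /orP [/eqP e|h]]; first by move: xo; rewrite e eqxx.
by move: h; rewrite orient_abb ltxx.
Qed.

Definition lep x y := (x == y) || ltp x y.

Lemma lep_trans : transitive lep.
Proof.
move=> y x z; rewrite /lep => /orP [/eqP -> //|h1] /orP [/eqP <-|h2].
  by rewrite h1 orbT.
by rewrite (ltp_trans h1 h2) orbT.
Qed.

Lemma ltp_LR l r : l \in L -> r \in Rs -> ltp l r.
Proof.
move=> lL rR; apply/and4P; split; [exact: LC | exact: RC | |].
  by apply/eqP => e; move: (disj lL); rewrite e oR.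
case: (eqVneq r o) => [-> //|ro]; apply/orP; right; exact: keyH.
Qed.

Lemma lep_totL : {in L &, total lep}.
Proof.
move=> x y xL yL; rewrite /lep.
case: (eqVneq x y) => [->|xy]; first by apply/orP; left; apply/orP; left.
have xo : x != o by apply/eqP => e; move: (disj xL); rewrite e oR.
have yo : y != o by apply/eqP => e; move: (disj yL); rewrite e oR.
rewrite /=.
have oC := RC oR.
have ox : o != x by rewrite eq_sym.
have oy : o != y by rewrite eq_sym.
case: (orient_nz cpC oC (LC xL) (LC yL) ox xy oy) => h.
  by rewrite /ltp (LC xL) (LC yL) xo h orbT.
by rewrite /ltp (LC xL) (LC yL) yo h !orbT.
Qed.

Lemma lep_totR : {in Rs &, total lep}.
Proof.
move=> x y xR yR; rewrite /lep.
case: (eqVneq x y) => [->|xy]; first by apply/orP; left; apply/orP; left.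
rewrite /=.
have xC := RC xR; have yC := RC yR.
case: (eqVneq x o) => [e|xo].
  rewrite e in xy *; apply/orP; right; apply/and4P; split => //;
    [exact: RC oR | by rewrite eq_sym | by rewrite eqxx].
case: (eqVneq y o) => [e|yo].
  rewrite e in xy *; apply/orP; left; apply/and4P; split => //;
    [exact: RC oR | by rewrite eqxx].
have ox : o != x by rewrite eq_sym.
have oy : o != y by rewrite eq_sym.
case: (orient_nz cpC (RC oR) xC yC ox xy oy) => h.
  by rewrite /ltp xC yC xo h orbT.
by rewrite /ltp xC yC yo h !orbT.
Qed.

Lemma pw_le_lt s : pairwise lep s -> uniq s -> pairwise ltp s.
Proof.
elim: s => //= x s IH /andP [hx hs] /andP [xs us].
rewrite IH // andbT; apply/allP => y ys.
move/allP: hx => /(_ y ys) /orP [/eqP e|//].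
by move: xs; rewrite e ys.
Qed.

Lemma sorted_sub (X : seq (point R)) : uniq X -> {in X &, total lep} ->
  [/\ uniq (sort lep X), size (sort lep X) = size X, sort lep X =i X &
      pairwise ltp (sort lep X)].
Proof.
move=> uX tX; split; [by rewrite sort_uniq | exact: size_sort | exact: mem_sort |].
apply: pw_le_lt; last by rewrite sort_uniq.
rewrite -sorted_pairwise; last exact: lep_trans.
apply: (sort_sorted_in tX); exact/allP.
Qed.

Lemma seq_ladder n col (q : seq (point R)) c : (1 <= n)%N ->
  (forall p p', col p p' = col p' p) -> pairwise ltp q -> size q = (2 * n)%N ->
  {subset q <= C} ->
  (forall i j, (i < j)%N -> (j < 2 * n)%N -> ty n i j ->
     col (nth (0,0) q i) (nth (0,0) q j) = c) ->
  mono_noncrossing_ladder n C col.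
Proof.
move=> n1 colS pq sq qC qcol.
apply: (ladder_of_seq (n:=n) (C:=C) (col:=col) (q:=q) (c:=c)) => //.
- exact: (pairwise_uniq ltp_irr pq).
- by move=> i hi; apply: qC; apply: mem_nth; rewrite sq.
- move=> i j k ij jk kn.
  have hp := pq; move/(pairwiseP (0,0)): hp => hp.
  apply: ltp_tri; apply: hp => //; rewrite ?inE /= ?sq //; lia.
Qed.

Lemma case_anti n col c0 (p : seq (point R)) : (1 <= n)%N ->
  (forall p p', col p p' = col p' p) -> pairwise ltp p -> size p = (2 * n)%N ->
  {subset p <= C} -> pairwise (fun x y => ~~ (col x y == c0)) p ->
  mono_noncrossing_ladder n C col.
Proof.
move=> n1 colS pq sq qC pa.
apply: (seq_ladder (c := ~~ c0) n1 colS pq sq qC) => i j ij jn _.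
have hp := pa; move/(pairwiseP (0,0)): hp => hp.
have := hp i j; rewrite !inE /= sq => /(_ ltac:(lia) jn ij).
by case: (col _ _); case: (c0).
Qed.

Lemma case_chain n col c0 (pL pR : seq (point R)) : (1 <= n)%N ->
  (forall p p', col p p' = col p' p) ->
  pairwise ltp pL -> pairwise ltp pR -> {subset pL <= L} -> {subset pR <= Rs} ->
  size pL = n -> size pR = n ->
  sorted (fun x y => col x y == c0) pL -> sorted (fun x y => col x y == c0) pR ->
  (forall l r, l \in L -> r \in Rs -> col l r = c0) ->
  mono_noncrossing_ladder n C col.
Proof.
move=> n1 colS pwL pwR subL subR szL szR chL chR hc.
apply: (seq_ladder (q := pL ++ pR) (c := c0) n1 colS).
- rewrite pairwise_cat; apply/and3P; split => //; apply/allrelP => x y xL yR.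
  by apply: ltp_LR; [exact: subL | exact: subR].
- by rewrite size_cat szL szR; lia.
- by move=> x; rewrite mem_cat => /orP [/subL /LC | /subR /RC].
move=> i j ij jn t.
rewrite !nth_cat szL.
case: (ltnP j n) => jn'.
  have ji : j = i.+1 by move: t; rewrite /ty; lia.
  rewrite (ltn_trans ij jn') ji.
  by apply/eqP; apply: (sortedP (0,0) chL); rewrite szL -ji.
case: (ltnP i n) => in'.
  apply: hc.
  - by apply: subL; apply: mem_nth; rewrite szL.
  - by apply: subR; apply: mem_nth; rewrite szR; lia.
have ji : j = i.+1 by move: t; rewrite /ty; lia.
rewrite ji subSn //.
by apply/eqP; apply: (sortedP (0,0) chR); rewrite szR; lia.
Qed.
End Order.

Unset Implicit Arguments.
Theorem lemmal (R : realFieldType) (n : nat) (C : seq (point R))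
    (col : point R -> point R -> bool) (L Rs : seq (point R)) :
  (1 <= n)%N ->
  convex_position C ->
  (forall p q, col p q = col q p) ->
  uniq L -> uniq Rs ->
  {subset L <= C} -> {subset Rs <= C} ->
  (forall p, p \in L -> p \notin Rs) ->
  size L = (2 * n ^ 2)%N -> size Rs = (2 * n ^ 2)%N ->
  line_separated L Rs ->
  (exists c : bool, forall p q, p \in L -> q \in Rs -> col p q = c) ->
  mono_noncrossing_ladder n C col.
Proof.
move=> n1 cpC colS uL uR LC RC disj sL sR [al [be [ga [_ [hL hR]]]]] [c0 hc].
have n2 : (0 < 2 * n ^ 2)%N by rewrite muln_gt0 expn_gt0 n1.
set l0 := nth (0,0) L 0.
have l0L : l0 \in L by apply: mem_nth; rewrite sL.
have l0C := LC _ l0L.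
have Rne : Rs != [::] by rewrite -size_eq0 sR -lt0n.
have nl0 : forall x, x \in Rs -> l0 != x.
  by move=> x xR; apply/eqP => e; move: (disj _ l0L); rewrite e xR.
have [o oR omax] : exists2 o, o \in Rs & forall r, r \in Rs -> r != o -> 0 < orient l0 r o.
  apply: (max_in (r := fun x y => 0 < orient l0 x y)) => //.
  - move=> x y z xR yR zR; exact: (piv_trans cpC l0C (RC x xR) (RC y yR) (RC z zR)).
  - move=> x y xR yR xy; apply: (orient_nz cpC) => //; [exact: RC | exact: RC | exact: nl0 | exact: nl0].
have keyH : forall l r, l \in L -> r \in Rs -> r != o -> 0 < orient o l r.
  move=> l r lL rR ro; exact: (key cpC LC RC disj l0L oR omax hL hR lL rR ro).
have [uL' szL' mL' pL'] := sorted_sub cpC RC oR uL (lep_totL cpC LC RC disj oR).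
have [uR' szR' mR' pR'] := sorted_sub cpC RC oR uR (lep_totR cpC RC oR).
have hsz : (n.-1 * (2 * n).-1 < 2 * n ^ 2)%N.
  rewrite -mulnn; case: n n1 {sL sR n2 szL' szR' keyH} => // m _; nia.
have m0 : (0 < 2 * n)%N by lia.
have subLC : forall p, subseq p (sort (lep C o) L) -> {subset p <= L}.
  by move=> p hp x /(mem_subseq hp); rewrite mL'.
have subRC : forall p, subseq p (sort (lep C o) Rs) -> {subset p <= Rs}.
  by move=> p hp x /(mem_subseq hp); rewrite mR'.
have := @chain_or_anti _ (fun x y => col x y == c0) (sort (lep C o) L) n (2 * n) n1 m0.
rewrite szL' sL => /(_ hsz) [[pL [sbL szL chL]] | [p [sb sz pa]]]; last first.
  apply: (case_anti cpC RC oR (c0 := c0) n1 colS _ sz _ pa).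
  - exact: subseq_pairwise sb pL'.
  - by move=> x /(subLC _ sb) /LC.
have := @chain_or_anti _ (fun x y => col x y == c0) (sort (lep C o) Rs) n (2 * n) n1 m0.
rewrite szR' sR => /(_ hsz) [[pR [sbR szR chR]] | [p [sb sz pa]]]; last first.
  apply: (case_anti cpC RC oR (c0 := c0) n1 colS _ sz _ pa).
  - exact: subseq_pairwise sb pR'.
  - by move=> x /(subRC _ sb) /RC.
apply: (case_chain cpC LC RC disj oR keyH n1 colS _ _ (subLC _ sbL) (subRC _ sbR) szL szR chL chR hc).
- exact: subseq_pairwise sbL pL'.
- exact: subseq_pairwise sbR pR'.
Qed.
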